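(* Let $\kappa,\gamma,\tau,\theta,f,s$ be strictly positive real constants, let $A = 2e^{-\gamma\tau}$, and let $\beta(Q) = f\,\dfrac{\theta^{s}}{\theta^{s}+Q^{s}}$ for $Q \ge 0$. Consider the delay differential equation $$Q'(t) = -\bigl(\kappa+\beta(Q(t))\bigr)Q(t) + A\,\beta(Q(t-\tau))\,Q(t-\tau).$$ If $Q(t)=\varphi(t)$ for $t\in[-\tau,0]$, where $\varphi\in C([-\tau,0],[0,\infty))$ (i.e. $\varphi$ is continuous and non-negative on $[-\tau,0]$), then this equation has a unique solution $Q(t)$ defined for all $t\ge 0$, and there exists some $M<\infty$ such that $Q(t)\in[0,M]$ for all $t\ge 0$.
   Context: This is the Burns–Tannock/Mackey model for the concentration $Q(t)$ of hematopoietic stem cells in the resting phase: $\kappa$ is the differentiation rate, $\gamma$ the apoptosis rate during proliferation, $\tau$ the cell-cycle duration (constant delay), $\beta$ the rate of entry into the cell cycle (a Hill function with maximal rate $f$, half-effect concentration $\theta$ and Hill coefficient $s$), and $A=2e^{-\gamma\tau}$ the amplification factor. A solution with initial history $\varphi$ means a continuous function $Q$ on $[-\tau,\infty)$ equal to $\varphi$ on $[-\tau,0]$ and satisfying the differential equation for $t>0$. *)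

(* Defs.v *)
From Stdlib Require Import Reals.
From Coquelicot Require Import Coquelicot.
Open Scope R_scope.

(* Q^s for the Hill function.  The paper only uses Q >= 0; there
   Q^s = Rpower Q s for Q > 0 and 0^s = 0 (s > 0).  For Q < 0 we use 0. *)
Definition hpow (Q s : R) : R := if Rle_dec Q 0 then 0 else Rpower Q s.

Definition beta (f theta s Q : R) : R :=
  f * Rpower theta s / (Rpower theta s + hpow Q s).

Definition amp (gamma tau : R) : R := 2 * exp (- gamma * tau).

(* right-hand side of the delay equation, given Q(t) = x and Q(t - tau) = y *)
Definition rhs (kappa gamma tau theta f s x y : R) : R :=
  - (kappa + beta f theta s x) * x + amp gamma tau * beta f theta s y * y.

Definition cont_within (D : R -> Prop) (g : R -> R) (t : R) : Prop :=
  filterlim g (within D (locally t)) (locally (g t)).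

Definition is_solution (kappa gamma tau theta f s : R) (phi Q : R -> R) : Prop :=
  (forall t, - tau <= t -> cont_within (fun x => - tau <= x) Q t) /\
  (forall t, - tau <= t <= 0 -> Q t = phi t) /\
  (forall t, 0 < t ->
     derivable_pt_lim Q t (rhs kappa gamma tau theta f s (Q t) (Q (t - tau)))).

(* Main.v *)
Require Import Defs.
From Stdlib Require Import Reals Lra Psatz.
From Coquelicot Require Import Coquelicot.
Open Scope R_scope.


Definition gg (f theta s x : R) : R := beta f theta s x * x.

Lemma hpow_nonneg x s : 0 <= hpow x s.
Proof. unfold hpow; destruct (Rle_dec x 0); [lra|]. unfold Rpower; left; apply exp_pos. Qed.

Lemma hpow_pos x s : 0 < x -> hpow x s = Rpower x s.
Proof. intro; unfold hpow; destruct (Rle_dec x 0); [lra|auto]. Qed.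

Lemma Rpower_pos' x s : 0 < Rpower x s.
Proof. unfold Rpower; apply exp_pos. Qed.

Lemma beta_bounds f theta s x : 0 < f -> 0 < theta -> 0 <= beta f theta s x <= f.
Proof.
  intros Hf Ht. unfold beta. pose proof (hpow_nonneg x s). pose proof (Rpower_pos' theta s).
  split.
  - apply Rdiv_le_0_compat; [nra| lra].
  - apply Rmult_le_reg_r with (Rpower theta s + hpow x s); [lra|].
    unfold Rdiv; rewrite Rmult_assoc, Rinv_l; [nra|lra].
Qed.

Lemma beta_neg f theta s x : x <= 0 -> beta f theta s x = f.
Proof.
  intros Hx. unfold beta, hpow. destruct (Rle_dec x 0); [|lra].
  pose proof (Rpower_pos' theta s). field. lra.
Qed.

Lemma gg_abs f theta s x : 0 < f -> 0 < theta -> Rabs (gg f theta s x) <= f * Rabs x.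
Proof.
  intros Hf Ht. unfold gg. rewrite Rabs_mult. pose proof (beta_bounds f theta s x Hf Ht).
  rewrite Rabs_pos_eq by lra. apply Rmult_le_compat_r; [apply Rabs_pos|lra].
Qed.

Lemma gg_nonneg f theta s x : 0 < f -> 0 < theta -> 0 <= x -> 0 <= gg f theta s x.
Proof. intros Hf Ht Hx. unfold gg. pose proof (beta_bounds f theta s x Hf Ht). nra. Qed.

Lemma gg_le f theta s x : 0 < f -> 0 < theta -> 0 <= x -> gg f theta s x <= f * x.
Proof. intros Hf Ht Hx. unfold gg. pose proof (beta_bounds f theta s x Hf Ht). nra. Qed.

Lemma gg_neg f theta s x : x <= 0 -> gg f theta s x = f * x.
Proof. intros; unfold gg; rewrite beta_neg; auto. Qed.

Definition Lg f s := f * (1 + Rabs (1 - s)).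

Definition gp f theta s x := f * Rpower theta s * x / (Rpower theta s + Rpower x s).
Definition gp' f theta s x :=
  f * Rpower theta s * (Rpower theta s + (1 - s) * Rpower x s) / (Rpower theta s + Rpower x s)^2.

Lemma gp_deriv f theta s x : 0 < x -> derivable_pt_lim (gp f theta s) x (gp' f theta s x).
Proof.
  intros Hx.
  pose proof (Rpower_pos' theta s) as Ha. pose proof (Rpower_pos' x s) as Hp.
  assert (E : x * Rpower x (s - 1) = Rpower x s).
  { rewrite <- (Rpower_1 x) at 1 by lra. rewrite <- Rpower_plus. f_equal; ring. }
  unfold gp, gp'.
  change (fun y => f * Rpower theta s * y / (Rpower theta s + Rpower y s)) with
    (div_fct (fun y => f * Rpower theta s * y) (fun y => Rpower theta s + Rpower y s)).
  - replace (f * Rpower theta s * (Rpower theta s + (1 - s) * Rpower x s) /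
       (Rpower theta s + Rpower x s) ^ 2) with
     (((f * Rpower theta s) * (Rpower theta s + Rpower x s) - s * Rpower x (s - 1) * (f * Rpower theta s * x)) /
       (Rpower theta s + Rpower x s)²).
    2:{ unfold Rsqr. set (q := Rpower x (s - 1)) in *. set (p := Rpower x s) in *.
        rewrite <- E. field. lra. }
    apply (derivable_pt_lim_div (fun y => f * Rpower theta s * y) (fun y => Rpower theta s + Rpower y s) x (f * Rpower theta s) (s * Rpower x (s - 1))).
    + replace (f * Rpower theta s) with (f * Rpower theta s * 1) at 1 by ring.
      apply derivable_pt_lim_scal with (f := id). apply derivable_pt_lim_id.
    + replace (s * Rpower x (s - 1)) with (0 + s * Rpower x (s - 1)) by ring.
      apply derivable_pt_lim_plus with (f1 := fun _ => Rpower theta s) (f2 := fun y => Rpower y s).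
      * apply derivable_pt_lim_const.
      * apply derivable_pt_lim_power; auto.
    + lra.
Qed.

Lemma gp'_bound f theta s x : 0 < f -> Rabs (gp' f theta s x) <= Lg f s.
Proof.
  intros Hf. unfold gp', Lg.
  pose proof (Rpower_pos' theta s) as Ha. pose proof (Rpower_pos' x s) as Hp.
  set (a := Rpower theta s) in *. set (p := Rpower x s) in *.
  assert (H1 : Rabs (a + (1 - s) * p) <= (1 + Rabs (1 - s)) * (a + p)).
  { apply Rabs_le. pose proof (Rabs_pos (1 - s)).
    destruct (Rle_dec 0 (1 - s)).
    - rewrite Rabs_pos_eq by lra. nra.
    - rewrite Rabs_left by lra. nra. }
  unfold Rdiv. rewrite Rabs_mult, Rabs_mult, Rabs_mult.
  rewrite (Rabs_pos_eq f), (Rabs_pos_eq a) by lra.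
  rewrite (Rabs_pos_eq (/ (a + p) ^ 2)) by (left; apply Rinv_0_lt_compat; apply pow_lt; lra).
  apply Rle_trans with (f * a * ((1 + Rabs (1 - s)) * (a + p)) * / (a + p) ^ 2).
  { apply Rmult_le_compat_r; [left; apply Rinv_0_lt_compat; apply pow_lt; lra|].
    apply Rmult_le_compat_l; nra. }
  replace (f * a * ((1 + Rabs (1 - s)) * (a + p)) * / (a + p) ^ 2)
    with (f * (1 + Rabs (1 - s)) * (a / (a + p))) by (field; lra).
  pose proof (Rabs_pos (1 - s)).
  rewrite <- (Rmult_1_r (f * (1 + Rabs (1 - s)))) at 2.
  apply Rmult_le_compat_l; [nra|].
  apply Rmult_le_reg_r with (a + p); [lra|]. unfold Rdiv. rewrite Rmult_assoc, Rinv_l; lra.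
Qed.

Lemma gg_gp f theta s x : 0 < x -> gg f theta s x = gp f theta s x.
Proof. intros Hx. unfold gg, gp, beta. rewrite hpow_pos by auto. field.
  pose proof (Rpower_pos' theta s); pose proof (Rpower_pos' x s); lra. Qed.

Lemma gg_lip_aux f theta s x y : 0 < f -> 0 < theta -> y < x ->
  Rabs (gg f theta s x - gg f theta s y) <= Lg f s * (x - y).
Proof.
  intros Hf Ht Hxy.
  assert (HL : f <= Lg f s) by (unfold Lg; pose proof (Rabs_pos (1 - s)); nra).
  destruct (Rle_dec y 0) as [Hy|Hy].
  - rewrite (gg_neg f theta s y Hy).
    destruct (Rle_dec x 0) as [Hx|Hx].
    + rewrite (gg_neg f theta s x Hx). rewrite <- Rmult_minus_distr_l, Rabs_mult, Rabs_pos_eq, Rabs_pos_eq; nra.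
    + pose proof (gg_nonneg f theta s x Hf Ht). pose proof (gg_le f theta s x Hf Ht).
      apply Rabs_le; split; nra.
  - destruct (MVT_cor2 (gp f theta s) (gp' f theta s) y x Hxy) as [c [Hc1 Hc2]].
    { intros c Hc. apply gp_deriv. lra. }
    rewrite gg_gp, gg_gp by lra. rewrite Hc1, Rabs_mult, (Rabs_pos_eq (x - y)) by lra.
    apply Rmult_le_compat_r; [lra|]. apply gp'_bound; auto.
Qed.

Lemma gg_lip f theta s x y : 0 < f -> 0 < theta ->
  Rabs (gg f theta s x - gg f theta s y) <= Lg f s * Rabs (x - y).
Proof.
  intros Hf Ht. destruct (Rtotal_order x y) as [H|[H|H]].
  - rewrite Rabs_minus_sym, (Rabs_minus_sym x). rewrite (Rabs_pos_eq (y - x)) by lra.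
    apply gg_lip_aux; auto.
  - subst. unfold Rminus. rewrite !Rplus_opp_r, Rabs_R0. lra.
  - rewrite (Rabs_pos_eq (x - y)) by lra. apply gg_lip_aux; auto.
Qed.

Lemma rhs_gg kappa gamma tau theta f s x y :
  rhs kappa gamma tau theta f s x y = - kappa * x - gg f theta s x + amp gamma tau * gg f theta s y.
Proof. unfold rhs, gg. ring. Qed.


Lemma sol_cont kappa gamma tau theta f s phi Q t :
  is_solution kappa gamma tau theta f s phi Q -> - tau < t -> continuity_pt Q t.
Proof.
  intros [Hc _] Ht. apply continuity_pt_filterlim. intros P HP.
  specialize (Hc t (Rlt_le _ _ Ht) P HP). unfold filtermap, within in Hc. unfold filtermap.
  assert (HD : locally t (fun x => - tau <= x)).
  { apply locally_interval with (a := Rbar.Finite (- tau)) (b := Rbar.p_infty); simpl; auto.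
    intros; lra. }
  generalize (filter_and _ _ Hc HD). apply filter_imp. intros x [H1 H2]. auto.
Qed.

Lemma decr_lemma (h dh : R -> R) a b : a <= b -> continuity_pt h a -> continuity_pt h b ->
  (forall c, a < c < b -> derivable_pt_lim h c (dh c) /\ dh c <= 0) -> h b <= h a.
Proof.
  intros Hab Ha Hb Hd. destruct (Req_dec a b) as [E|Hne]; [subst; lra|].
  set (df := fun c => if Rlt_dec a c then if Rlt_dec c b then dh c else 0 else 0).
  destruct (MVT_gen h a b df) as [c [Hc E]].
  - rewrite Rmin_left, Rmax_right by lra. intros x Hx. unfold df.
    destruct (Rlt_dec a x); [|lra]. destruct (Rlt_dec x b); [|lra].
    apply is_derive_Reals. apply Hd; lra.
  - rewrite Rmin_left, Rmax_right by lra. intros x Hx.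
    destruct (Req_dec x a); [subst; auto|]. destruct (Req_dec x b); [subst; auto|].
    apply derivable_continuous_pt. exists (dh x). apply Hd; lra.
  - assert (df c <= 0).
    { unfold df. destruct (Rlt_dec a c); [|lra]. destruct (Rlt_dec c b); [|lra]. apply Hd; lra. }
    assert (df c * (b - a) <= 0) by (apply Rmult_le_0_r; lra). lra.
Qed.

Lemma deriv_exp_lin c u : derivable_pt_lim (fun u => exp (c * u)) u (c * exp (c * u)).
Proof.
  rewrite Rmult_comm.
  apply (derivable_pt_lim_comp (fun u => c * u) exp u c (exp (c * u))).
  - assert (H : derivable_pt_lim (fun u => c * u) u (c * 1))
      by (apply (derivable_pt_lim_scal id c u 1); apply derivable_pt_lim_id).
    rewrite Rmult_1_r in H. exact H.
  - apply derivable_pt_lim_exp.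
Qed.

Lemma dpl_ext f x l l' : derivable_pt_lim f x l -> l = l' -> derivable_pt_lim f x l'.
Proof. intros H E; subst; auto. Qed.

Lemma amp_pos gamma tau : 0 < amp gamma tau.
Proof. unfold amp. pose proof (exp_pos (- gamma * tau)). lra. Qed.

Lemma exists_n_ge x : exists n : nat, x <= INR n.
Proof. destruct (INR_unbounded x) as [n Hn]. exists n. lra. Qed.

Lemma step_induction tau (P : R -> Prop) : 0 < tau ->
  (forall t, - tau <= t <= 0 -> P t) ->
  (forall n : nat, (forall t, - tau <= t <= INR n * tau -> P t) ->
     forall t, INR n * tau < t <= INR (S n) * tau -> P t) ->
  forall t, - tau <= t -> P t.
Proof.
  intros Htau H0 HS.
  assert (Hall : forall n : nat, forall t, - tau <= t <= INR n * tau -> P t).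
  { induction n.
    - simpl. intros t Ht. apply H0. lra.
    - intros t Ht. destruct (Rle_dec t (INR n * tau)).
      + apply IHn. lra.
      + apply (HS n IHn). lra. }
  intros t Ht. destruct (exists_n_ge (t / tau)) as [n Hn]. apply (Hall n). split; auto.
  apply Rmult_le_compat_r with (r := tau) in Hn; [|lra].
  unfold Rdiv in Hn. rewrite Rmult_assoc, Rinv_l, Rmult_1_r in Hn; lra.
Qed.

Lemma uniqueness kappa gamma tau theta f s phi Q1 Q2 :
  0 < kappa -> 0 < tau -> 0 < theta -> 0 < f ->
  is_solution kappa gamma tau theta f s phi Q1 ->
  is_solution kappa gamma tau theta f s phi Q2 ->
  forall t, - tau <= t -> Q1 t = Q2 t.
Proof.
  intros Hk Htau Hth Hf S1 S2.
  pose proof S1 as [_ [E1 D1]]. pose proof S2 as [_ [E2 D2]].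
  apply step_induction; auto.
  - intros t Ht. rewrite E1, E2; auto.
  - intros n IH t Ht.
    assert (Hn0 : 0 <= INR n * tau) by (apply Rmult_le_pos; [apply pos_INR|lra]).
    rewrite S_INR in Ht.
    set (L1 := kappa + Lg f s).
    set (E := fun u => (Q1 u - Q2 u) * (Q1 u - Q2 u) * exp (- 2 * L1 * u)).
    set (a := INR n * tau).
    assert (Ea : E a = 0).
    { unfold E. rewrite (IH a) by (unfold a; lra). ring. }
    assert (HE : E t <= E a).
    { apply decr_lemma with (dh := fun u =>
         (2 * (Q1 u - Q2 u) * (rhs kappa gamma tau theta f s (Q1 u) (Q1 (u - tau)) -
                              rhs kappa gamma tau theta f s (Q2 u) (Q2 (u - tau))))
          * exp (- 2 * L1 * u) + (Q1 u - Q2 u) * (Q1 u - Q2 u) * (- 2 * L1 * exp (- 2 * L1 * u))).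
      - unfold a; lra.
      - unfold E. apply continuity_pt_mult.
        + apply continuity_pt_mult; apply continuity_pt_minus; eapply sol_cont; eauto; unfold a; lra.
        + apply derivable_continuous_pt. exists (- 2 * L1 * exp (- 2 * L1 * a)). apply deriv_exp_lin.
      - unfold E. apply continuity_pt_mult.
        + apply continuity_pt_mult; apply continuity_pt_minus; eapply sol_cont; eauto; lra.
        + apply derivable_continuous_pt. exists (- 2 * L1 * exp (- 2 * L1 * t)). apply deriv_exp_lin.
      - intros c Hc. unfold a in Hc. split.
        + assert (H1 := D1 c ltac:(lra)). assert (H2 := D2 c ltac:(lra)).
          apply dpl_ext with (l := ((rhs kappa gamma tau theta f s (Q1 c) (Q1 (c - tau)) -
                              rhs kappa gamma tau theta f s (Q2 c) (Q2 (c - tau))) * (Q1 c - Q2 c) + (Q1 c - Q2 c) * (rhs kappa gamma tau theta f s (Q1 c) (Q1 (c - tau)) -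
                              rhs kappa gamma tau theta f s (Q2 c) (Q2 (c - tau)))) *
                              exp (- 2 * L1 * c) + (Q1 c - Q2 c) * (Q1 c - Q2 c) * (- 2 * L1 * exp (- 2 * L1 * c))); [|ring].
          unfold E.
          apply (derivable_pt_lim_mult (fun u => (Q1 u - Q2 u) * (Q1 u - Q2 u)) (fun u => exp (- 2 * L1 * u))).
          * apply (derivable_pt_lim_mult (fun u => Q1 u - Q2 u) (fun u => Q1 u - Q2 u));
            apply (derivable_pt_lim_minus Q1 Q2); auto.
          * apply deriv_exp_lin.
        + rewrite (IH (c - tau)) by lra.
          set (y := Q2 (c - tau)). set (x1 := Q1 c). set (x2 := Q2 c).
          rewrite !rhs_gg.
          pose proof (gg_lip f theta s x1 x2 Hf Hth) as HL.
          pose proof (exp_pos (- 2 * L1 * c)) as He.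
          assert (Hb : (x1 - x2) * (- kappa * x1 - gg f theta s x1 + amp gamma tau * gg f theta s y -
             (- kappa * x2 - gg f theta s x2 + amp gamma tau * gg f theta s y)) <= L1 * ((x1 - x2) * (x1 - x2))).
          { replace ((x1 - x2) * (- kappa * x1 - gg f theta s x1 + amp gamma tau * gg f theta s y -
             (- kappa * x2 - gg f theta s x2 + amp gamma tau * gg f theta s y)))
              with (- kappa * ((x1 - x2) * (x1 - x2)) - (x1 - x2) * (gg f theta s x1 - gg f theta s x2)) by ring.
            assert (- ((x1 - x2) * (gg f theta s x1 - gg f theta s x2)) <= Lg f s * ((x1 - x2) * (x1 - x2))).
            { eapply Rle_trans; [apply Rle_abs|]. rewrite Rabs_Ropp, Rabs_mult.
              replace ((x1 - x2) * (x1 - x2)) with (Rabs (x1 - x2) * Rabs (x1 - x2)).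
              2:{ rewrite <- Rabs_mult. apply Rabs_pos_eq. exact (Rle_0_sqr (x1 - x2)). }
              pose proof (Rabs_pos (x1 - x2)). nra. }
            unfold L1. pose proof (Rle_0_sqr (x1 - x2)). unfold Rsqr in *. nra. }
          nra.
    }
    assert (0 <= E t) by (unfold E; apply Rmult_le_pos; [apply Rle_0_sqr| left; apply exp_pos]).
    assert (Z : (Q1 t - Q2 t) * (Q1 t - Q2 t) * exp (- 2 * L1 * t) = 0) by (unfold E in *; lra).
    apply Rmult_integral in Z. destruct Z as [Z|Z]; [|pose proof (exp_pos (- 2 * L1 * t)); lra].
    apply Rmult_integral in Z. destruct Z; lra.
Qed.


Lemma sol_nonneg kappa gamma tau theta f s phi Q :
  0 < kappa -> 0 < tau -> 0 < theta -> 0 < f ->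
  (forall t, - tau <= t <= 0 -> 0 <= phi t) ->
  is_solution kappa gamma tau theta f s phi Q ->
  forall t, - tau <= t -> 0 <= Q t.
Proof.
  intros Hk Htau Hth Hf Hphi S1. pose proof S1 as [_ [E1 D1]].
  apply step_induction; auto.
  - intros t Ht. rewrite E1; auto.
  - intros n IH t Ht.
    assert (Hn0 : 0 <= INR n * tau) by (apply Rmult_le_pos; [apply pos_INR|lra]).
    rewrite S_INR in Ht. set (a := INR n * tau). set (c := kappa + f).
    assert (Ha : 0 <= Q a) by (apply IH; unfold a in *; lra).
    assert (HE : (fun u => - (Q u * exp (c * u))) t <= (fun u => - (Q u * exp (c * u))) a).
    { apply (decr_lemma (fun u => - (Q u * exp (c * u))) (fun u =>
         - (rhs kappa gamma tau theta f s (Q u) (Q (u - tau)) * exp (c * u) + Q u * (c * exp (c * u)))) a t).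
      - unfold a in *; lra.
      - apply continuity_pt_opp. apply continuity_pt_mult.
        + eapply sol_cont; eauto; unfold a in *; lra.
        + apply derivable_continuous_pt. exists (c * exp (c * a)). apply deriv_exp_lin.
      - apply continuity_pt_opp. apply continuity_pt_mult.
        + eapply sol_cont; eauto; unfold a in *; lra.
        + apply derivable_continuous_pt. exists (c * exp (c * t)). apply deriv_exp_lin.
      - intros u Hu. unfold a in Hu. split.
        + apply (derivable_pt_lim_opp (fun u => Q u * exp (c * u))).
          apply (derivable_pt_lim_mult Q (fun u => exp (c * u))).
          * apply D1; lra.
          * apply deriv_exp_lin.
        + rewrite rhs_gg. pose proof (exp_pos (c * u)) as He.
          assert (Hd : 0 <= Q (u - tau)) by (apply IH; unfold a in *; lra).
          pose proof (gg_nonneg f theta s _ Hf Hth Hd).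
          pose proof (amp_pos gamma tau).
          assert (0 <= f * Q u - gg f theta s (Q u)).
          { destruct (Rle_dec (Q u) 0).
            - rewrite gg_neg; auto; lra.
            - pose proof (gg_le f theta s (Q u) Hf Hth ltac:(lra)); lra. }
          assert (0 <= (- kappa * Q u - gg f theta s (Q u) + amp gamma tau * gg f theta s (Q (u - tau))) + c * Q u).
          { unfold c. nra. }
          nra. }
    simpl in HE. pose proof (exp_pos (c * t)). pose proof (exp_pos (c * a)).
    assert (0 <= Q t * exp (c * t)) by nra. nra.
Qed.

Lemma sol_upper kappa gamma tau theta f s phi Q M :
  0 < kappa -> 0 < tau -> 0 < theta -> 0 < f ->
  (forall t, - tau <= t <= 0 -> 0 <= phi t) ->
  (forall t, - tau <= t <= 0 -> phi t <= M) ->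
  (forall x, 0 <= x <= M -> amp gamma tau * gg f theta s x <= kappa * M) ->
  is_solution kappa gamma tau theta f s phi Q ->
  forall t, - tau <= t -> Q t <= M.
Proof.
  intros Hk Htau Hth Hf Hphi HM Hkey S1. pose proof S1 as [_ [E1 D1]].
  pose proof (sol_nonneg kappa gamma tau theta f s phi Q Hk Htau Hth Hf Hphi S1) as Hnn.
  apply step_induction; auto.
  - intros t Ht. rewrite E1; auto.
  - intros n IH t Ht.
    assert (Hn0 : 0 <= INR n * tau) by (apply Rmult_le_pos; [apply pos_INR|lra]).
    rewrite S_INR in Ht. set (a := INR n * tau). set (c := kappa).
    assert (Ha : Q a <= M) by (apply IH; unfold a in *; lra).
    assert (HE : (fun u => (Q u - M) * exp (c * u)) t <= (fun u => (Q u - M) * exp (c * u)) a).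
    { apply (decr_lemma (fun u => (Q u - M) * exp (c * u)) (fun u =>
         (rhs kappa gamma tau theta f s (Q u) (Q (u - tau)) - 0) * exp (c * u) + (Q u - M) * (c * exp (c * u))) a t).
      - unfold a in *; lra.
      - apply continuity_pt_mult.
        + apply continuity_pt_minus; [eapply sol_cont; eauto; unfold a in *; lra| apply continuity_pt_const; intros ??; auto].
        + apply derivable_continuous_pt. exists (c * exp (c * a)). apply deriv_exp_lin.
      - apply continuity_pt_mult.
        + apply continuity_pt_minus; [eapply sol_cont; eauto; lra| apply continuity_pt_const; intros ??; auto].
        + apply derivable_continuous_pt. exists (c * exp (c * t)). apply deriv_exp_lin.
      - intros u Hu. unfold a in Hu. split.
        + apply (derivable_pt_lim_mult (fun u => Q u - M) (fun u => exp (c * u))).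
          * apply (derivable_pt_lim_minus Q (fun _ => M)); [apply D1; lra| apply derivable_pt_lim_const].
          * apply deriv_exp_lin.
        + rewrite rhs_gg. pose proof (exp_pos (c * u)) as He.
          assert (Hd : 0 <= Q (u - tau) <= M) by (split; [apply Hnn; lra | apply IH; lra]).
          pose proof (Hkey _ Hd).
          pose proof (gg_nonneg f theta s (Q u) Hf Hth (Hnn u ltac:(lra))).
          assert ((- kappa * Q u - gg f theta s (Q u) + amp gamma tau * gg f theta s (Q (u - tau)) - 0) + (Q u - M) * c <= 0).
          { unfold c. nra. }
          nra. }
    simpl in HE. pose proof (exp_pos (c * t)). pose proof (exp_pos (c * a)).
    assert ((Q a - M) * exp (c * a) <= 0) by nra. nra.
Qed.

Lemma key_M kappa gamma theta f s tau Phi : 0 < kappa -> 0 < theta -> 0 < f -> 0 < s ->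
  exists M, Phi <= M /\ forall x, 0 <= x <= M -> amp gamma tau * gg f theta s x <= kappa * M.
Proof.
  intros Hk Hth Hf Hs.
  pose proof (amp_pos gamma tau) as HA. set (A := amp gamma tau) in *.
  pose proof (Rpower_pos' theta s) as Ha. set (a := Rpower theta s) in *.
  set (K := A * f * a / kappa).
  assert (HK : 0 < K). { unfold K. apply Rdiv_lt_0_compat; [|lra]. apply Rmult_lt_0_compat; [apply Rmult_lt_0_compat|]; lra. }
  set (x1 := Rpower K (1 / s)).
  assert (Hx1 : Rpower x1 s = K).
  { unfold x1. rewrite Rpower_mult. replace (1 / s * s) with 1 by (field; lra). apply Rpower_1; auto. }
  pose proof (Rpower_pos' K (1 / s)) as Hx1p. fold x1 in Hx1p.
  exists (Rmax Phi (A * f * x1 / kappa)). split; [apply Rmax_l|].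
  intros x Hx.
  set (M := Rmax Phi (A * f * x1 / kappa)) in *.
  assert (HM1 : A * f * x1 / kappa <= M) by apply Rmax_r.
  assert (HM2 : A * f * x1 <= kappa * M).
  { apply Rmult_le_compat_l with (r := kappa) in HM1; [|lra].
    replace (kappa * (A * f * x1 / kappa)) with (A * f * x1) in HM1 by (field; lra). auto. }
  destruct (Req_dec x 0) as [E|Hx0].
  { subst. unfold gg. rewrite Rmult_0_r, Rmult_0_r. nra. }
  destruct (Rle_dec K (Rpower x s)) as [HP|HP].
  - rewrite gg_gp by lra. unfold gp. fold a.
    pose proof (Rpower_pos' x s).
    assert (f * a * x / (a + Rpower x s) <= kappa * x / A).
    { apply Rle_trans with (f * a * x / K).
      - unfold Rdiv. apply Rmult_le_compat_l; [apply Rmult_le_pos; [apply Rmult_le_pos|]; lra|]. apply Rinv_le_contravar; lra.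
      - unfold K. right. field. repeat split; lra. }
    apply Rle_trans with (kappa * x).
    + apply Rmult_le_compat_l with (r := A) in H0; [|lra].
      replace (A * (kappa * x / A)) with (kappa * x) in H0 by (field; lra). auto.
    + nra.
  - assert (x < x1).
    { destruct (Rlt_dec x x1); auto. exfalso. apply HP. rewrite <- Hx1.
      apply Rle_Rpower_l; lra. }
    pose proof (gg_le f theta s x Hf Hth ltac:(lra)).
    assert (A * gg f theta s x <= A * (f * x)) by (apply Rmult_le_compat_l; lra).
    assert (A * (f * x) <= A * f * x1). { rewrite <- Rmult_assoc. apply Rmult_le_compat_l; [left; apply Rmult_lt_0_compat|]; lra. }
    lra.
Qed.


Lemma lip_cont (h : R -> R) t B :
  (forall t', Rabs (t' - t) < 1 -> Rabs (h t' - h t) <= B * Rabs (t' - t)) -> continuity_pt h t.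
Proof.
  intros H. unfold continuity_pt, continue_in, limit1_in, limit_in. simpl. unfold R_dist.
  intros eps Heps.
  set (B' := Rabs B + 1).
  exists (Rmin 1 (eps / B')). split.
  { apply Rmin_pos; [lra|]. apply Rdiv_lt_0_compat; [lra|]. unfold B'; pose proof (Rabs_pos B); lra. }
  intros x [_ Hx].
  assert (Hx1 : Rabs (x - t) < 1) by (eapply Rlt_le_trans; [apply Hx| apply Rmin_l]).
  assert (Hx2 : Rabs (x - t) < eps / B') by (eapply Rlt_le_trans; [apply Hx| apply Rmin_r]).
  specialize (H x Hx1).
  assert (HB : 0 < B') by (unfold B'; pose proof (Rabs_pos B); lra).
  apply Rle_lt_trans with (B' * Rabs (x - t)).
  - eapply Rle_trans; [apply H|]. apply Rmult_le_compat_r; [apply Rabs_pos|].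
    unfold B'. pose proof (Rle_abs B). lra.
  - apply Rmult_lt_compat_l with (r := B') in Hx2; auto.
    replace (B' * (eps / B')) with eps in Hx2 by (field; lra). auto.
Qed.

Lemma cont_F (F : R -> R -> R) L (a b : R -> R) t : 0 < L ->
  (forall x y x' y', Rabs (F x y - F x' y') <= L * (Rabs (x - x') + Rabs (y - y'))) ->
  continuity_pt a t -> continuity_pt b t -> continuity_pt (fun u => F (a u) (b u)) t.
Proof.
  intros HL HF Ha Hb. unfold continuity_pt, continue_in, limit1_in, limit_in in *. simpl in *.
  unfold R_dist in *. intros eps Heps.
  destruct (Ha (eps / (2 * L))) as [a1 [Ha1 Ha2]]; [apply Rdiv_lt_0_compat; lra|].
  destruct (Hb (eps / (2 * L))) as [b1 [Hb1 Hb2]]; [apply Rdiv_lt_0_compat; lra|].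
  exists (Rmin a1 b1). split; [apply Rmin_pos; auto|].
  intros x [Hd Hx].
  assert (A1 := Ha2 x (conj Hd (Rlt_le_trans _ _ _ Hx (Rmin_l _ _)))).
  assert (B1 := Hb2 x (conj Hd (Rlt_le_trans _ _ _ Hx (Rmin_r _ _)))).
  eapply Rle_lt_trans; [apply HF|].
  replace eps with (L * (eps / (2 * L) + eps / (2 * L))) by (field; lra).
  apply Rmult_lt_compat_l; lra.
Qed.

Lemma cont_coq (h : R -> R) t : continuity_pt h t -> continuous h t.
Proof. intros H. apply continuity_pt_filterlim. auto. Qed.

Lemma ex_RInt_cont (h : R -> R) a b : (forall u, continuity_pt h u) -> ex_RInt h a b.
Proof. intros H. apply (ex_RInt_continuous (V:=R_CompleteNormedModule)). intros z _. apply cont_coq. auto. Qed.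

Lemma int_le (h g : R -> R) a b : a <= b -> (forall u, continuity_pt h u) -> (forall u, continuity_pt g u) ->
  (forall u, a <= u <= b -> Rabs (h u) <= g u) -> Rabs (RInt h a b) <= RInt g a b.
Proof.
  intros Hab Hh Hg Hle. eapply Rle_trans; [apply abs_RInt_le; auto; apply ex_RInt_cont; auto|].
  apply RInt_le; auto.
  - apply (ex_RInt_continuous (V:=R_CompleteNormedModule)). intros z _. apply cont_coq.
    apply (continuity_pt_comp h Rabs); auto. apply Rcontinuity_abs.
  - apply ex_RInt_cont; auto.
  - intros x Hx. apply Hle. lra.
Qed.

Lemma RInt_exp K k t : 0 < k -> RInt (fun u => K * exp (k * u)) 0 t = K / k * (exp (k * t) - 1).
Proof.
  intros Hk. apply is_RInt_unique.
  replace (K / k * (exp (k * t) - 1)) with (minus (K / k * exp (k * t)) (K / k * exp (k * 0))).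
  2:{ rewrite Rmult_0_r, exp_0. unfold minus, plus, opp; simpl. ring. }
  apply (is_RInt_derive (fun u => K / k * exp (k * u))).
  - intros x _. apply is_derive_Reals.
    assert (H : derivable_pt_lim (fun u => K / k * exp (k * u)) x (K / k * (k * exp (k * x)))).
    { apply (derivable_pt_lim_scal (fun u => exp (k * u))).
      rewrite Rmult_comm.
      apply (derivable_pt_lim_comp (fun u => k * u) exp x k (exp (k * x))).
      - assert (H : derivable_pt_lim (fun u => k * u) x (k * 1))
          by (apply (derivable_pt_lim_scal id k x 1); apply derivable_pt_lim_id).
        rewrite Rmult_1_r in H. exact H.
      - apply derivable_pt_lim_exp. }
    replace (K * exp (k * x)) with (K / k * (k * exp (k * x))) by (field; lra). exact H.
  - intros x _. apply cont_coq. apply continuity_pt_mult; [apply continuity_pt_const; intros ??; auto|].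
    apply (continuity_pt_comp (fun u => k * u) exp).
    + apply continuity_pt_mult; [apply continuity_pt_const; intros ??; auto| apply continuity_pt_id].
    + apply derivable_continuous_pt. apply derivable_pt_exp.
Qed.

Lemma RInt_cst B a b : RInt (fun _ => B) a b = B * (b - a).
Proof. rewrite RInt_const. unfold scal; simpl. unfold mult; simpl. ring. Qed.


Definition Gf (F : R -> R -> R) (y : R -> R) (tau u : R) : R := F (y u) (y (u - tau)).

Definition RI (h : R -> R) (a b : R) : R := RInt h a b.

Fixpoint xs (F : R -> R -> R) (pe : R -> R) (tau : R) (n : nat) : R -> R :=
  match n with
  | O => pe
  | S m => fun t => pe t + RI (Gf F (xs F pe tau m) tau) 0 (Rmax t 0)
  end.

Lemma RInt_diff (h1 h2 : R -> R) a b : (forall u, continuity_pt h1 u) -> (forall u, continuity_pt h2 u) ->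
  RI h1 a b - RI h2 a b = RI (fun u => h1 u - h2 u) a b.
Proof.
  intros H1 H2. unfold RI.
  assert (E := RInt_minus (V:=R_CompleteNormedModule) h1 h2 a b (ex_RInt_cont _ _ _ H1) (ex_RInt_cont _ _ _ H2)).
  unfold minus, plus, opp in E; simpl in E. symmetry. exact E.
Qed.

Lemma RInt_pt (h : R -> R) a : RI h a a = 0.
Proof. unfold RI. rewrite RInt_point. reflexivity. Qed.

Lemma Rmax0_lip a b : Rabs (Rmax a 0 - Rmax b 0) <= Rabs (a - b).
Proof. unfold Rmax. destruct (Rle_dec a 0), (Rle_dec b 0); apply Rabs_le; split;
  try (pose proof (Rle_abs (a - b)); pose proof (Rle_abs (- (a - b))); rewrite Rabs_Ropp in *; lra). Qed.

Lemma Rmax0_cont t : continuity_pt (fun t => Rmax t 0) t.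
Proof. apply lip_cont with 1. intros t' _. rewrite Rmult_1_l. apply Rmax0_lip. Qed.

Lemma G_cont F L y tau : 0 < L ->
  (forall x y x' y', Rabs (F x y - F x' y') <= L * (Rabs (x - x') + Rabs (y - y'))) ->
  (forall t, continuity_pt y t) -> forall u, continuity_pt (Gf F y tau) u.
Proof.
  intros HL HF Hy u. unfold Gf. apply (cont_F F L y (fun u => y (u - tau))); auto.
  apply (continuity_pt_comp (fun u => u - tau) y).
  - apply continuity_pt_minus; [apply continuity_pt_id| apply continuity_pt_const; intros ??; auto].
  - auto.
Qed.

Lemma RInt_is_derive (h : R -> R) t : (forall u, continuity_pt h u) ->
  is_derive (fun b => RInt h 0 b) t (h t).
Proof.
  intros H. apply (is_derive_RInt (V:=R_CompleteNormedModule) h (fun b => RInt h 0 b) 0 t).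
  - apply filter_forall. intros b. apply (RInt_correct (V:=R_CompleteNormedModule)). apply ex_RInt_cont; auto.
  - apply cont_coq; auto.
Qed.

Lemma RInt0_cont (h : R -> R) t : (forall u, continuity_pt h u) ->
  continuity_pt (fun t => RI h 0 (Rmax t 0)) t.
Proof.
  intros H. unfold RI. apply (continuity_pt_comp (fun t => Rmax t 0) (fun b => RInt h 0 b)).
  - apply Rmax0_cont.
  - apply derivable_continuous_pt. exists (h (Rmax t 0)). apply is_derive_Reals. apply RInt_is_derive; auto.
Qed.

Lemma xs_neg F pe tau n t : t <= 0 -> xs F pe tau n t = pe t.
Proof. intros Ht. destruct n; simpl; auto. rewrite Rmax_right by lra. rewrite RInt_pt. ring. Qed.

Lemma xs_pos F pe tau n t : 0 <= t -> xs F pe tau (S n) t = pe t + RI (Gf F (xs F pe tau n) tau) 0 t.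
Proof. intros Ht. simpl. rewrite Rmax_left by lra. auto. Qed.

Lemma xs_cont F L pe tau : 0 < L ->
  (forall x y x' y', Rabs (F x y - F x' y') <= L * (Rabs (x - x') + Rabs (y - y'))) ->
  (forall t, continuity_pt pe t) -> forall n t, continuity_pt (xs F pe tau n) t.
Proof.
  intros HL HF Hp. induction n; intros t; simpl; auto.
  apply (continuity_pt_plus pe (fun t => RI (Gf F (xs F pe tau n) tau) 0 (Rmax t 0))); auto.
  apply RInt0_cont. apply G_cont with L; auto.
Qed.

Definition hyps (F : R -> R -> R) L (pe : R -> R) tau Phi : Prop :=
  0 < L /\ 0 <= tau /\
  (forall x y x' y', Rabs (F x y - F x' y') <= L * (Rabs (x - x') + Rabs (y - y'))) /\
  F 0 0 = 0 /\ (forall t, continuity_pt pe t) /\ (forall t, Rabs (pe t) <= Phi) /\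
  (forall t, 0 <= t -> pe t = pe 0).

Lemma F_bound F L x y : F 0 0 = 0 ->
  (forall x y x' y', Rabs (F x y - F x' y') <= L * (Rabs (x - x') + Rabs (y - y'))) ->
  Rabs (F x y) <= L * (Rabs x + Rabs y).
Proof. intros H0 HF. specialize (HF x y 0 0). rewrite H0, !Rminus_0_r in HF. exact HF. Qed.

Lemma exp_mono a b : a <= b -> exp a <= exp b.
Proof. intros [H|H]; [left; apply exp_increasing; auto| subst; lra]. Qed.

Lemma delta_bound F L pe tau Phi : hyps F L pe tau Phi ->
  forall n t, Rabs (xs F pe tau (S n) t - xs F pe tau n t) <= Phi / 2 ^ n * exp (4 * L * t).
Proof.
  intros (HL & Htau & HF & HF0 & Hpc & Hpb & Hp0).
  assert (HPhi : 0 <= Phi) by (eapply Rle_trans; [apply Rabs_pos| apply (Hpb 0)]).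
  assert (Hxc := xs_cont F L pe tau HL HF Hpc).
  induction n; intros t.
  - destruct (Rle_dec t 0) as [Ht|Ht].
    { rewrite !xs_neg by auto. rewrite Rminus_diag, Rabs_R0. simpl.
      apply Rmult_le_pos; [lra| left; apply exp_pos]. }
    rewrite xs_pos by lra. change (xs F pe tau 0) with pe. simpl pow.
    replace (pe t + RI (Gf F pe tau) 0 t - pe t) with (RI (Gf F pe tau) 0 t) by ring.
    unfold RI. eapply Rle_trans.
    { apply (int_le _ (fun _ => L * (Phi + Phi))); try lra.
      - apply G_cont with L; auto.
      - intros; apply continuity_pt_const; intros ??; auto.
      - intros u _. unfold Gf. eapply Rle_trans; [apply F_bound; auto|].
        apply Rmult_le_compat_l; [lra|]. apply Rplus_le_compat; auto. }
    rewrite RInt_cst.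
    pose proof (exp_ineq1 (4 * L * t) ltac:(nra)).
    assert (0 <= Phi * t) by nra.
    assert (Phi * (4 * L * t) <= Phi * exp (4 * L * t)) by (apply Rmult_le_compat_l; lra).
    nra.
  - destruct (Rle_dec t 0) as [Ht|Ht].
    { rewrite !xs_neg by auto. rewrite Rminus_diag, Rabs_R0.
      apply Rmult_le_pos; [apply Rdiv_le_0_compat; [lra| apply pow_lt; lra]| left; apply exp_pos]. }
    rewrite !xs_pos by lra.
    replace (pe t + RI (Gf F (xs F pe tau (S n)) tau) 0 t - (pe t + RI (Gf F (xs F pe tau n) tau) 0 t))
      with (RI (Gf F (xs F pe tau (S n)) tau) 0 t - RI (Gf F (xs F pe tau n) tau) 0 t) by ring.
    rewrite RInt_diff by (apply G_cont with L; auto).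
    unfold RI. eapply Rle_trans.
    { apply (int_le _ (fun u => (2 * L * (Phi / 2 ^ n)) * exp (4 * L * u))); try lra.
      - intros u. apply continuity_pt_minus; apply G_cont with L; auto.
      - intros u. apply continuity_pt_mult; [apply continuity_pt_const; intros ??; auto|].
        apply derivable_continuous_pt. apply derivable_pt_comp; [|apply derivable_pt_exp].
        apply derivable_pt_scal. apply derivable_pt_id.
      - intros u _. unfold Gf. eapply Rle_trans; [apply HF|].
        pose proof (IHn u). pose proof (IHn (u - tau)).
        assert (exp (4 * L * (u - tau)) <= exp (4 * L * u)) by (apply exp_mono; nra).
        assert (0 <= Phi / 2 ^ n) by (apply Rdiv_le_0_compat; [lra| apply pow_lt; lra]).
        assert (Phi / 2 ^ n * exp (4 * L * (u - tau)) <= Phi / 2 ^ n * exp (4 * L * u))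
          by (apply Rmult_le_compat_l; lra).
        nra. }
    rewrite RInt_exp by lra.
    assert (0 < 2 ^ n) by (apply pow_lt; lra).
    simpl pow.
    replace (2 * L * (Phi / 2 ^ n) / (4 * L) * (exp (4 * L * t) - 1))
      with (Phi / (2 * 2 ^ n) * (exp (4 * L * t) - 1)) by (field; lra).
    assert (0 <= Phi / (2 * 2 ^ n)) by (apply Rdiv_le_0_compat; lra).
    nra.
Qed.

Lemma cauchy_bound F L pe tau Phi : hyps F L pe tau Phi ->
  forall n p t, Rabs (xs F pe tau (n + p) t - xs F pe tau n t) <=
    2 * Phi * exp (4 * L * t) * (/ 2 ^ n - / 2 ^ (n + p)).
Proof.
  intros H n p t. induction p.
  - rewrite Nat.add_0_r, Rminus_diag, Rabs_R0, Rminus_diag, Rmult_0_r. lra.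
  - pose proof (delta_bound F L pe tau Phi H (n + p) t) as D.
    replace (n + S p)%nat with (S (n + p)) by lia.
    replace (xs F pe tau (S (n + p)) t - xs F pe tau n t) with
      ((xs F pe tau (S (n + p)) t - xs F pe tau (n + p) t) + (xs F pe tau (n + p) t - xs F pe tau n t)) by ring.
    eapply Rle_trans; [apply Rabs_triang|].
    simpl pow. assert (0 < 2 ^ (n + p)) by (apply pow_lt; lra). assert (0 < 2 ^ n) by (apply pow_lt; lra).
    replace (2 * Phi * exp (4 * L * t) * (/ 2 ^ n - / (2 * 2 ^ (n + p))))
      with (Phi / 2 ^ (n + p) * exp (4 * L * t) + 2 * Phi * exp (4 * L * t) * (/ 2 ^ n - / 2 ^ (n + p)))
      by (field; repeat split; lra).
    lra.
Qed.

Lemma cauchy_bound' F L pe tau Phi : hyps F L pe tau Phi ->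
  forall n m t, (n <= m)%nat -> Rabs (xs F pe tau m t - xs F pe tau n t) <= 2 * Phi / 2 ^ n * exp (4 * L * t).
Proof.
  intros H n m t Hnm. pose proof H as (HL & Htau & HF & HF0 & Hpc & Hpb & Hp0).
  assert (HPhi : 0 <= Phi) by (eapply Rle_trans; [apply Rabs_pos| apply (Hpb 0)]).
  replace m with (n + (m - n))%nat by lia.
  eapply Rle_trans; [apply (cauchy_bound F L pe tau Phi H)|].
  assert (0 < / 2 ^ (n + (m - n))) by (apply Rinv_0_lt_compat, pow_lt; lra).
  pose proof (exp_pos (4 * L * t)).
  unfold Rdiv. assert (0 <= 2 * Phi * exp (4 * L * t)) by nra.
  replace (2 * Phi * / 2 ^ n * exp (4 * L * t)) with (2 * Phi * exp (4 * L * t) * / 2 ^ n) by ring.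
  assert (0 <= 2 * Phi * exp (4 * L * t) * / 2 ^ (n + (m - n))) by (apply Rmult_le_pos; lra).
  rewrite Rmult_minus_distr_l. lra.
Qed.

Lemma INR_le_pow2 n : INR n <= 2 ^ n.
Proof. induction n; [simpl; lra|]. rewrite S_INR. simpl pow. pose proof (pow_R1_Rle 2 n ltac:(lra)). lra. Qed.

Lemma pow2_small K eps : 0 < eps -> exists N, forall n, (N <= n)%nat -> K / 2 ^ n < eps.
Proof.
  intros He. destruct (INR_unbounded (Rabs K / eps)) as [N HN].
  exists N. intros n Hn.
  assert (HNn : INR N <= INR n) by (apply le_INR; auto).
  assert (0 <= Rabs K / eps) by (apply Rdiv_le_0_compat; [apply Rabs_pos| lra]).
  pose proof (INR_le_pow2 n). assert (0 < 2 ^ n) by (apply pow_lt; lra).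
  apply Rle_lt_trans with (Rabs K / 2 ^ n).
  { unfold Rdiv. apply Rmult_le_compat_r; [left; apply Rinv_0_lt_compat; lra| apply Rle_abs]. }
  apply Rmult_lt_reg_r with (2 ^ n); [lra|]. unfold Rdiv. rewrite Rmult_assoc, Rinv_l, Rmult_1_r by lra.
  apply Rmult_lt_compat_l with (r := eps) in HN; [|lra].
  replace (eps * (Rabs K / eps)) with (Rabs K) in HN by (field; lra). nra.
Qed.

Lemma zero_of_pow2 a K : (forall n, Rabs a <= K / 2 ^ n) -> a = 0.
Proof.
  intros H. assert (Rabs a <= 0).
  { apply Rle_plus_epsilon. intros eps He. destruct (pow2_small K eps He) as [N HN].
    specialize (HN N (le_n _)). specialize (H N). lra. }
  pose proof (Rabs_pos a). assert (Rabs a = 0) by lra. destruct (Req_dec a 0); auto.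
  exfalso. apply Rabs_no_R0 in H2; auto.
Qed.

Lemma lim_le (u v : nat -> R) (l1 l2 : R) N B : is_lim_seq u l1 -> is_lim_seq v l2 ->
  (forall n, (N <= n)%nat -> Rabs (u n - v n) <= B) -> Rabs (l1 - l2) <= B.
Proof.
  intros Hu Hv H. apply is_lim_seq_Reals in Hu. apply is_lim_seq_Reals in Hv.
  apply Rle_plus_epsilon. intros eps He.
  destruct (Hu (eps / 2)) as [N1 H1]; [lra|]. destruct (Hv (eps / 2)) as [N2 H2]; [lra|].
  set (n := (N + N1 + N2)%nat).
  specialize (H1 n ltac:(unfold n; lia)). specialize (H2 n ltac:(unfold n; lia)).
  specialize (H n ltac:(unfold n; lia)). unfold R_dist in *.
  replace (l1 - l2) with ((u n - v n) - (u n - l1) + (v n - l2)) by ring.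
  eapply Rle_trans; [apply Rabs_triang|]. eapply Rle_trans; [apply Rplus_le_compat_r, Rabs_triang|].
  rewrite Rabs_Ropp. lra.
Qed.

Definition Qlim F pe tau t := real (Lim_seq (fun n => xs F pe tau n t)).

Lemma Q_is_lim F L pe tau Phi : hyps F L pe tau Phi ->
  forall t, is_lim_seq (fun n => xs F pe tau n t) (Qlim F pe tau t).
Proof.
  intros H t. unfold Qlim.
  pose proof H as (HL & Htau & HF & HF0 & Hpc & Hpb & Hp0).
  assert (E : ex_finite_lim_seq (fun n => xs F pe tau n t)).
  { apply ex_lim_seq_cauchy_corr. intros eps.
    destruct (pow2_small (2 * Phi * exp (4 * L * t)) eps (cond_pos eps)) as [N HN].
    exists N. intros n m Hn Hm.
    destruct (Nat.le_ge_cases n m) as [Hnm|Hnm].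
    - rewrite Rabs_minus_sym. eapply Rle_lt_trans; [apply (cauchy_bound' F L pe tau Phi H n m t Hnm)|].
      specialize (HN n Hn). unfold Rdiv in *. replace (2 * Phi * / 2 ^ n * exp (4 * L * t)) with
        (2 * Phi * exp (4 * L * t) * / 2 ^ n) by ring. auto.
    - eapply Rle_lt_trans; [apply (cauchy_bound' F L pe tau Phi H m n t Hnm)|].
      specialize (HN m Hm). unfold Rdiv in *. replace (2 * Phi * / 2 ^ m * exp (4 * L * t)) with
        (2 * Phi * exp (4 * L * t) * / 2 ^ m) by ring. auto. }
  destruct E as [l Hl]. rewrite (is_lim_seq_unique _ _ Hl). simpl. auto.
Qed.

Lemma Q_tail F L pe tau Phi : hyps F L pe tau Phi ->
  forall n t, Rabs (Qlim F pe tau t - xs F pe tau n t) <= 2 * Phi / 2 ^ n * exp (4 * L * t).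
Proof.
  intros H n t. apply (lim_le _ _ _ _ n _ (Q_is_lim F L pe tau Phi H t) (is_lim_seq_const _)).
  intros m Hm. apply (cauchy_bound' F L pe tau Phi H n m t Hm).
Qed.

Lemma Q_neg F L pe tau Phi : hyps F L pe tau Phi ->
  forall t, t <= 0 -> Qlim F pe tau t = pe t.
Proof.
  intros H t Ht.
  assert (Rabs (Qlim F pe tau t - pe t) <= 0).
  { apply (lim_le _ _ _ _ 0 _ (Q_is_lim F L pe tau Phi H t) (is_lim_seq_const _)).
    intros m _. rewrite xs_neg by auto. rewrite Rminus_diag, Rabs_R0. lra. }
  pose proof (Rabs_pos (Qlim F pe tau t - pe t)).
  destruct (Req_dec (Qlim F pe tau t - pe t) 0). lra.
  apply Rabs_no_R0 in H2. lra.
Qed.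

Lemma xs_abs F L pe tau Phi : hyps F L pe tau Phi ->
  forall n u, Rabs (xs F pe tau n u) <= Phi + 2 * Phi * exp (4 * L * u).
Proof.
  intros H n u. pose proof H as (HL & Htau & HF & HF0 & Hpc & Hpb & Hp0).
  pose proof (cauchy_bound' F L pe tau Phi H 0 n u (Nat.le_0_l n)) as C. simpl in C.
  replace (xs F pe tau n u) with ((xs F pe tau n u - pe u) + pe u) by ring.
  eapply Rle_trans; [apply Rabs_triang|]. specialize (Hpb u).
  replace (2 * Phi / 1) with (2 * Phi) in C by field. lra.
Qed.

Lemma RI_chasles (h : R -> R) a b c : (forall u, continuity_pt h u) -> RI h a b + RI h b c = RI h a c.
Proof. intros H. unfold RI. apply (RInt_Chasles (V:=R_CompleteNormedModule)); apply ex_RInt_cont; auto. Qed.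

Definition BT L Phi T := 2 * L * (Phi + 2 * Phi * exp (4 * L * T)).

Lemma xs_lip F L pe tau Phi : hyps F L pe tau Phi ->
  forall n t1 t2 T, 0 <= t1 <= t2 -> t2 <= T ->
  Rabs (xs F pe tau (S n) t2 - xs F pe tau (S n) t1) <= BT L Phi T * (t2 - t1).
Proof.
  intros H n t1 t2 T H12 HT. pose proof H as (HL & Htau & HF & HF0 & Hpc & Hpb & Hp0).
  assert (Hxc := xs_cont F L pe tau HL HF Hpc).
  assert (HG := G_cont F L (xs F pe tau n) tau HL HF (Hxc n)).
  rewrite !xs_pos by lra. rewrite (Hp0 t1), (Hp0 t2) by lra.
  replace (pe 0 + RI (Gf F (xs F pe tau n) tau) 0 t2 - (pe 0 + RI (Gf F (xs F pe tau n) tau) 0 t1))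
    with (RI (Gf F (xs F pe tau n) tau) 0 t2 - RI (Gf F (xs F pe tau n) tau) 0 t1) by ring.
  rewrite <- (RI_chasles (Gf F (xs F pe tau n) tau) 0 t1 t2) by auto.
  replace (RI (Gf F (xs F pe tau n) tau) 0 t1 + RI (Gf F (xs F pe tau n) tau) t1 t2 -
     RI (Gf F (xs F pe tau n) tau) 0 t1) with (RI (Gf F (xs F pe tau n) tau) t1 t2) by ring.
  unfold RI.
  eapply Rle_trans.
  { apply (int_le _ (fun _ => BT L Phi T)); try lra; auto.
    - intros; apply continuity_pt_const; intros ??; auto.
    - intros u Hu. unfold Gf. eapply Rle_trans; [apply F_bound; auto|].
      pose proof (xs_abs F L pe tau Phi H n u). pose proof (xs_abs F L pe tau Phi H n (u - tau)).
      assert (exp (4 * L * u) <= exp (4 * L * T)) by (apply exp_mono; nra).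
      assert (exp (4 * L * (u - tau)) <= exp (4 * L * T)) by (apply exp_mono; nra).
      assert (HPhi : 0 <= Phi) by (eapply Rle_trans; [apply Rabs_pos| apply (Hpb 0)]).
      assert (2 * Phi * exp (4 * L * u) <= 2 * Phi * exp (4 * L * T)) by (apply Rmult_le_compat_l; lra).
      assert (2 * Phi * exp (4 * L * (u - tau)) <= 2 * Phi * exp (4 * L * T)) by (apply Rmult_le_compat_l; lra).
      unfold BT. replace (2 * L * (Phi + 2 * Phi * exp (4 * L * T))) with (L * (2 * (Phi + 2 * Phi * exp (4 * L * T)))) by ring.
      apply Rmult_le_compat_l; lra. }
  rewrite RInt_cst. lra.
Qed.

Lemma Q_lip F L pe tau Phi : hyps F L pe tau Phi ->
  forall t1 t2 T, 0 <= t1 <= T -> 0 <= t2 <= T ->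
  Rabs (Qlim F pe tau t2 - Qlim F pe tau t1) <= BT L Phi T * Rabs (t2 - t1).
Proof.
  intros H.
  assert (K : forall t1 t2 T, 0 <= t1 <= t2 -> t2 <= T ->
     Rabs (Qlim F pe tau t2 - Qlim F pe tau t1) <= BT L Phi T * Rabs (t2 - t1)).
  { intros t1 t2 T H12 HT. rewrite (Rabs_pos_eq (t2 - t1)) by lra.
    apply (lim_le _ _ _ _ 1 _ (Q_is_lim F L pe tau Phi H t2) (Q_is_lim F L pe tau Phi H t1)).
    intros [|m] Hm; [lia|]. apply xs_lip; auto. }
  intros t1 t2 T H1 H2. destruct (Rle_dec t1 t2).
  - apply K; lra.
  - rewrite Rabs_minus_sym, (Rabs_minus_sym t2). apply K; lra.
Qed.

Lemma Q_cont F L pe tau Phi : hyps F L pe tau Phi ->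
  forall t, continuity_pt (Qlim F pe tau) t.
Proof.
  intros H t. pose proof H as (HL & Htau & HF & HF0 & Hpc & Hpb & Hp0).
  apply continuity_pt_ext with (fun t => pe t + (Qlim F pe tau (Rmax t 0) - pe 0)).
  { intros x. destruct (Rle_dec x 0).
    - rewrite Rmax_right by lra. rewrite (Q_neg F L pe tau Phi H 0) by lra.
      rewrite (Q_neg F L pe tau Phi H x) by lra. ring.
    - rewrite Rmax_left by lra. rewrite Hp0 by lra. ring. }
  apply (continuity_pt_plus pe (fun t => Qlim F pe tau (Rmax t 0) - pe 0)); auto.
  apply (continuity_pt_minus (fun t => Qlim F pe tau (Rmax t 0)) (fun _ => pe 0));
    [| apply continuity_pt_const; intros ??; auto].
  apply lip_cont with (BT L Phi (Rabs t + 1)).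
  intros t' Ht'. eapply Rle_trans.
  - apply (Q_lip F L pe tau Phi H) with (T := Rabs t + 1).
    + split; [apply Rmax_r|]. unfold Rmax. destruct (Rle_dec t 0); pose proof (Rle_abs t); pose proof (Rabs_pos t); lra.
    + split; [apply Rmax_r|]. unfold Rmax. destruct (Rle_dec t' 0); pose proof (Rle_abs t);
        pose proof (Rle_abs (t' - t)); pose proof (Rabs_pos t); lra.
  - apply Rmult_le_compat_l; [|apply Rmax0_lip].
    assert (HPhi : 0 <= Phi) by (eapply Rle_trans; [apply Rabs_pos| apply (Hpb 0)]).
    pose proof (exp_pos (4 * L * (Rabs t + 1))). unfold BT.
    apply Rmult_le_pos; [lra|]. assert (0 <= 2 * Phi * exp (4 * L * (Rabs t + 1))) by (apply Rmult_le_pos; lra). lra.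
Qed.

Lemma Q_int F L pe tau Phi : hyps F L pe tau Phi ->
  forall t, 0 <= t -> Qlim F pe tau t = pe 0 + RI (Gf F (Qlim F pe tau) tau) 0 t.
Proof.
  intros H t Ht. pose proof H as (HL & Htau & HF & HF0 & Hpc & Hpb & Hp0).
  assert (HPhi : 0 <= Phi) by (eapply Rle_trans; [apply Rabs_pos| apply (Hpb 0)]).
  assert (Hxc := xs_cont F L pe tau HL HF Hpc).
  assert (HQc := Q_cont F L pe tau Phi H).
  assert (HGQ := G_cont F L _ tau HL HF HQc).
  set (Q := Qlim F pe tau) in *.
  enough (E : Q t - (pe 0 + RI (Gf F Q tau) 0 t) = 0) by lra.
  apply (zero_of_pow2 _ (2 * Phi * exp (4 * L * t))). intros n.
  assert (0 < 2 ^ n) by (apply pow_lt; lra).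
  pose proof (Q_tail F L pe tau Phi H (S n) t) as T1. fold Q in T1.
  assert (T2 : Rabs (xs F pe tau (S n) t - (pe 0 + RI (Gf F Q tau) 0 t)) <= Phi / 2 ^ n * exp (4 * L * t)).
  { rewrite xs_pos by lra. rewrite Hp0 by lra.
    replace (pe 0 + RI (Gf F (xs F pe tau n) tau) 0 t - (pe 0 + RI (Gf F Q tau) 0 t))
      with (RI (Gf F (xs F pe tau n) tau) 0 t - RI (Gf F Q tau) 0 t) by ring.
    rewrite RInt_diff by (auto; apply G_cont with L; auto).
    unfold RI. eapply Rle_trans.
    { apply (int_le _ (fun u => (4 * L * Phi / 2 ^ n) * exp (4 * L * u))); try lra.
      - intros u. apply continuity_pt_minus; auto. apply G_cont with L; auto.
      - intros u. apply continuity_pt_mult; [apply continuity_pt_const; intros ??; auto|].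
        apply derivable_continuous_pt. apply derivable_pt_comp; [|apply derivable_pt_exp].
        apply derivable_pt_scal. apply derivable_pt_id.
      - intros u _. unfold Gf. eapply Rle_trans; [apply HF|].
        pose proof (Q_tail F L pe tau Phi H n u) as A1. pose proof (Q_tail F L pe tau Phi H n (u - tau)) as A2.
        fold Q in A1, A2. rewrite Rabs_minus_sym in A1, A2.
        assert (exp (4 * L * (u - tau)) <= exp (4 * L * u)) by (apply exp_mono; nra).
        assert (0 <= 2 * Phi / 2 ^ n) by (apply Rdiv_le_0_compat; lra).
        assert (2 * Phi / 2 ^ n * exp (4 * L * (u - tau)) <= 2 * Phi / 2 ^ n * exp (4 * L * u))
          by (apply Rmult_le_compat_l; lra).
        replace (4 * L * Phi / 2 ^ n * exp (4 * L * u)) with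
          (L * (2 * Phi / 2 ^ n * exp (4 * L * u) + 2 * Phi / 2 ^ n * exp (4 * L * u))) by (field; lra).
        apply Rmult_le_compat_l; lra. }
    rewrite RInt_exp by lra.
    replace (4 * L * Phi / 2 ^ n / (4 * L) * (exp (4 * L * t) - 1))
      with (Phi / 2 ^ n * (exp (4 * L * t) - 1)) by (field; lra).
    assert (0 <= Phi / 2 ^ n) by (apply Rdiv_le_0_compat; lra). nra. }
  replace (Q t - (pe 0 + RI (Gf F Q tau) 0 t)) with
    ((Q t - xs F pe tau (S n) t) + (xs F pe tau (S n) t - (pe 0 + RI (Gf F Q tau) 0 t))) by ring.
  eapply Rle_trans; [apply Rabs_triang|].
  simpl pow in T1.
  replace (2 * Phi / (2 * 2 ^ n) * exp (4 * L * t)) with (Phi / 2 ^ n * exp (4 * L * t)) in T1 by (field; lra).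
  replace (2 * Phi * exp (4 * L * t) / 2 ^ n) with (Phi / 2 ^ n * exp (4 * L * t) + Phi / 2 ^ n * exp (4 * L * t))
    by (field; lra).
  lra.
Qed.

Lemma exist_generic F L pe tau Phi : hyps F L pe tau Phi ->
  exists Q : R -> R, (forall t, continuity_pt Q t) /\ (forall t, t <= 0 -> Q t = pe t) /\
    (forall t, 0 < t -> derivable_pt_lim Q t (F (Q t) (Q (t - tau)))).
Proof.
  intros H. pose proof H as (HL & Htau & HF & HF0 & Hpc & Hpb & Hp0).
  assert (HQc := Q_cont F L pe tau Phi H).
  assert (HGQ := G_cont F L _ tau HL HF HQc).
  exists (Qlim F pe tau). split; [auto| split; [apply (Q_neg F L pe tau Phi H)|]].
  intros t Ht. apply is_derive_Reals.
  apply (is_derive_ext_loc (fun u => pe 0 + RI (Gf F (Qlim F pe tau) tau) 0 u)).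
  { apply locally_interval with (a := Rbar.Finite 0) (b := Rbar.p_infty); simpl; auto.
    intros y Hy _. symmetry. apply (Q_int F L pe tau Phi H). lra. }
  apply is_derive_Reals.
  replace (F (Qlim F pe tau t) (Qlim F pe tau (t - tau))) with (0 + Gf F (Qlim F pe tau) tau t) by (unfold Gf; ring).
  apply (derivable_pt_lim_plus (fun _ => pe 0) (fun u => RI (Gf F (Qlim F pe tau) tau) 0 u)).
  - apply derivable_pt_lim_const.
  - apply is_derive_Reals. unfold RI. apply RInt_is_derive. auto.
Qed.


Definition clamp tau t := Rmax (- tau) (Rmin t 0).

Lemma clamp_lip tau a b : 0 < tau -> Rabs (clamp tau a - clamp tau b) <= Rabs (a - b).
Proof.
  intros Ht. unfold clamp, Rmax, Rmin.
  pose proof (Rle_abs (a - b)). pose proof (Rle_abs (- (a - b))). rewrite Rabs_Ropp in *.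
  repeat destruct Rle_dec; apply Rabs_le; split; lra.
Qed.

Lemma clamp_in tau t : 0 < tau -> - tau <= clamp tau t <= 0.
Proof. intros Ht. unfold clamp, Rmax, Rmin. repeat destruct Rle_dec; lra. Qed.

Lemma clamp_id tau t : - tau <= t <= 0 -> clamp tau t = t.
Proof. intros Ht. unfold clamp, Rmax, Rmin. repeat destruct Rle_dec; lra. Qed.

Lemma pe_cont tau (phi : R -> R) t : 0 < tau ->
  (forall t, - tau <= t <= 0 -> cont_within (fun x => - tau <= x <= 0) phi t) ->
  continuity_pt (fun t => phi (clamp tau t)) t.
Proof.
  intros Htau Hphi. apply continuity_pt_filterlim.
  apply (filterlim_comp _ _ _ (clamp tau) phi (locally t)
    (within (fun x => - tau <= x <= 0) (locally (clamp tau t)))).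
  - intros P HP. unfold within in HP.
    assert (Hc : continuity_pt (clamp tau) t).
    { apply lip_cont with 1. intros t' _. rewrite Rmult_1_l. apply clamp_lip; auto. }
    apply continuity_pt_filterlim in Hc. specialize (Hc _ HP).
    unfold filtermap in *. revert Hc. apply filter_imp. intros x Hx. apply Hx. apply clamp_in; auto.
  - apply Hphi. apply clamp_in; auto.
Qed.

Theorem theorem1 (kappa gamma tau theta f s : R) (phi : R -> R) :
  0 < kappa -> 0 < gamma -> 0 < tau -> 0 < theta -> 0 < f -> 0 < s ->
  (forall t, - tau <= t <= 0 -> cont_within (fun x => - tau <= x <= 0) phi t) ->
  (forall t, - tau <= t <= 0 -> 0 <= phi t) ->
  exists Q : R -> R,
    is_solution kappa gamma tau theta f s phi Q /\
    (forall Q' : R -> R, is_solution kappa gamma tau theta f s phi Q' ->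
       forall t, - tau <= t -> Q' t = Q t) /\
    (exists M : R, forall t, 0 <= t -> 0 <= Q t <= M).
Proof.
  intros Hk Hg Htau Hth Hf Hs Hpc Hpn.
  set (pe := fun t => phi (clamp tau t)).
  assert (Hpec : forall t, continuity_pt pe t) by (intros; apply pe_cont; auto).
  destruct (continuity_ab_maj pe (- tau) 0 ltac:(lra) (fun c _ => Hpec c)) as [Mx [HMx HMx']].
  set (Phi := pe Mx).
  assert (Hpeb : forall t, Rabs (pe t) <= Phi).
  { intros t. unfold pe. rewrite Rabs_pos_eq by (apply Hpn, clamp_in; auto).
    pose proof (HMx (clamp tau t) (clamp_in tau t Htau)). unfold pe in H.
    rewrite clamp_id in H by (apply clamp_in; auto). auto. }
  pose proof (amp_pos gamma tau) as HA.
  set (L := kappa + Lg f s + amp gamma tau * Lg f s).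
  assert (HLg : 0 < Lg f s) by (unfold Lg; pose proof (Rabs_pos (1 - s)); nra).
  assert (H : hyps (rhs kappa gamma tau theta f s) L pe tau Phi).
  { unfold hyps. split; [unfold L; nra|]. split; [lra|]. split; [|split; [|split; [|split]]]; auto.
    - intros x y x' y'. rewrite !rhs_gg.
      pose proof (gg_lip f theta s x x' Hf Hth). pose proof (gg_lip f theta s y y' Hf Hth).
      replace (- kappa * x - gg f theta s x + amp gamma tau * gg f theta s y -
         (- kappa * x' - gg f theta s x' + amp gamma tau * gg f theta s y'))
        with (- kappa * (x - x') - (gg f theta s x - gg f theta s x') + amp gamma tau * (gg f theta s y - gg f theta s y')) by ring.
      eapply Rle_trans; [apply Rabs_triang|]. eapply Rle_trans; [apply Rplus_le_compat_r, Rabs_triang|].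
      rewrite Rabs_Ropp, !Rabs_mult, Rabs_Ropp, (Rabs_pos_eq kappa), (Rabs_pos_eq (amp gamma tau)) by lra.
      pose proof (Rabs_pos (x - x')). pose proof (Rabs_pos (y - y')).
      assert (amp gamma tau * Rabs (gg f theta s y - gg f theta s y') <= amp gamma tau * (Lg f s * Rabs (y - y')))
        by (apply Rmult_le_compat_l; lra).
      assert (0 <= kappa * Rabs (y - y')) by (apply Rmult_le_pos; lra).
      assert (0 <= Lg f s * Rabs (y - y')) by (apply Rmult_le_pos; lra).
      assert (0 <= amp gamma tau * Lg f s * Rabs (x - x')) by (apply Rmult_le_pos; [apply Rmult_le_pos|]; lra).
      unfold L. ring_simplify. nra.
    - unfold rhs. ring.
    - intros t Ht. unfold pe, clamp. rewrite !Rmin_right by lra. auto. }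
  destruct (exist_generic _ _ _ _ _ H) as [Q [Qc [Qneg Qd]]].
  assert (Sol : is_solution kappa gamma tau theta f s phi Q).
  { split; [|split].
    - intros t _. intros P HP. unfold filtermap, within.
      pose proof (proj1 (continuity_pt_filterlim Q t) (Qc t)) as C. specialize (C P HP). unfold filtermap in C.
      apply (filter_imp (fun x => P (Q x))); auto.
    - intros t Ht. rewrite Qneg by lra. unfold pe. rewrite clamp_id; auto.
    - intros t Ht. apply Qd; auto. }
  exists Q. split; [auto| split].
  - intros Q' S' t Ht. apply (uniqueness kappa gamma tau theta f s phi Q' Q); auto.
  - destruct (key_M kappa gamma theta f s tau Phi Hk Hth Hf Hs) as [M [HM1 HM2]].
    exists M. intros t Ht. split.
    + apply (sol_nonneg kappa gamma tau theta f s phi Q); auto. lra.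
    + apply (sol_upper kappa gamma tau theta f s phi Q M); auto; [|lra].
      intros t' Ht'. specialize (Hpeb t'). unfold pe in Hpeb. rewrite clamp_id in Hpeb by auto.
      pose proof (Rle_abs (phi t')). lra.
Qed.
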